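(* Let $G$ be a directed graph with distinct vertices $s,t$. An augmented $s$-$t$ path graph of $G$ has the same set of minimum $s$-$t$ cuts as $G$.
   Context: An $s$-$t$ cut of a directed graph is a set of edges whose removal leaves no directed $s$-$t$ path; a minimum $s$-$t$ cut is one of minimum cardinality $\lambda(G)$. An augmented $s$-$t$ path graph of $G$ is constructed as follows: take a collection $\mathcal P$ of $\lambda(G)$ pairwise edge-disjoint directed $s$-$t$ paths of $G$ and let $H$ be the graph formed by the union of these paths (its vertex set $V(H)$ is covered by $\mathcal P$, and its edges are the path edges); then add to $H$ a (non-path) edge $(u,v)$ for any two vertices $u,v\in V(H)$ such that $v$ is reachable from $u$ in $G$ by a directed path all of whose internal vertices lie in $V(G)\setminus V(H)$ (in particular, whenever $(u,v)$ is an edge of $G$). *)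

(* Defs.v *)
From mathcomp Require Import all_boot.
Set Implicit Arguments. Unset Strict Implicit. Unset Printing Implicit Defensive.

Definition step_in (V Ed : finType) (src dst : Ed -> V) (F : {set Ed}) : rel V :=
  fun x y => [exists e in F, (src e == x) && (dst e == y)].

(* C is an s-t cut of the graph with edge set E: C is a set of edges whose
   removal leaves no directed s-t path (= no directed s-t walk). *)
Definition is_st_cut (V Ed : finType) (src dst : Ed -> V) (E : {set Ed})
  (s t : V) (C : {set Ed}) : Prop :=
  C \subset E /\ ~~ connect (step_in src dst (E :\: C)) s t.

Definition is_min_st_cut (V Ed : finType) (src dst : Ed -> V) (E : {set Ed})
  (s t : V) (C : {set Ed}) : Prop :=
  is_st_cut src dst E s t C /\
  forall C', is_st_cut src dst E s t C' -> #|C| <= #|C'|.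

Definition Gcut (V : finType) (E : {set V * V}) := is_st_cut (@fst V V) (@snd V V) E.
Definition Gmincut (V : finType) (E : {set V * V}) := is_min_st_cut (@fst V V) (@snd V V) E.

Definition lambda_is (V : finType) (E : {set V * V}) (s t : V) (k : nat) : Prop :=
  (exists C, Gmincut E s t C /\ #|C| = k).

Definition is_st_path (V : finType) (E : {set V * V}) (s t : V) (p : seq V) : bool :=
  [&& path (fun x y => (x, y) \in E) s p, last s p == t & uniq (s :: p)].

Definition path_edges (V : finType) (s : V) (p : seq V) : {set V * V} :=
  [set e | e \in zip (s :: p) p].

Section Aug.
Variables (V : finType) (E : {set V * V}) (s : V) (k : nat) (P : 'I_k -> seq V).

Definition VH : {set V} := [set v | [exists i, v \in s :: P i]].
Definition PE : {set V * V} := \bigcup_(i < k) path_edges s (P i).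

(* v is reachable from u in G by a directed path all of whose internal vertices
   lie outside V(H), excluding the trivial witness consisting of a single path
   edge (which is already an edge of H): either (u,v) is a non-path edge of G,
   or there is a path u -> w1 ~> w2 -> v with w1 ... w2 outside V(H). *)
Definition outside_reach (u v : V) : bool :=
  (((u, v) \in E) && ((u, v) \notin PE)) ||
  [exists w1, exists w2,
     [&& w1 \notin VH, w2 \notin VH, (u, w1) \in E, (w2, v) \in E &
         connect (fun x y => [&& x \notin VH, y \notin VH & (x, y) \in E]) w1 w2]].

(* edges of the augmented graph: ((u,v), true) are the path edges (u,v) of H,
   ((u,v), false) are the added non-path edges (u,v). *)
Definition aug_edges : {set (V * V) * bool} :=
  [set e | if e.2 then e.1 \in PE
           else [&& e.1.1 \in VH, e.1.2 \in VH, e.1.1 != e.1.2 & outside_reach e.1.1 e.1.2]].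

End Aug.

Definition aug_src (V : finType) (e : (V * V) * bool) : V := e.1.1.
Definition aug_dst (V : finType) (e : (V * V) * bool) : V := e.1.2.

Definition Hmincut (V : finType) (E : {set V * V}) (s t : V) (k : nat) (P : 'I_k -> seq V) :=
  is_min_st_cut (@aug_src V) (@aug_dst V) (aug_edges E s P) s t.

Definition as_path_edges (V : finType) (C : {set V * V}) : {set (V * V) * bool} :=
  [set (e, true) | e in C].

(* Main.v *)
Require Import Defs.
From mathcomp Require Import all_boot.
Set Implicit Arguments. Unset Strict Implicit. Unset Printing Implicit Defensive.

Lemma zip_mem (T : eqType) (s : T) (p : seq T) x y :
  (x, y) \in zip (s :: p) p -> x \in s :: p /\ y \in p.
Proof.
elim: p s => [|z p IH] s //=; rewrite in_cons => /orP [/eqP [-> ->]|].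
  by rewrite !in_cons !eqxx.
move=> /IH [h1 h2]; split.
  by rewrite h1 orbT.
by rewrite in_cons h2 orbT.
Qed.

Lemma path_zip (T : eqType) (r : rel T) s p x y :
  path r s p -> (x, y) \in zip (s :: p) p -> r x y.
Proof.
elim: p s => [|z p IH] s //= /andP [hsz hp]; rewrite in_cons => /orP [/eqP [-> ->]//|].
exact: IH.
Qed.

Lemma zip_path (T : eqType) (r : rel T) s p :
  (forall x y, (x, y) \in zip (s :: p) p -> r x y) -> path r s p.
Proof.
elim: p s => [|z p IH] s //= h; apply/andP; split.
  by apply: h; rewrite in_cons eqxx.
by apply: IH => x y hxy; apply: h; rewrite in_cons hxy orbT.
Qed.

Lemma path_inv (T : finType) (e : rel T) (I : pred T) x p :
  (forall a b, I a -> e a b -> I b) -> path e x p -> I x -> I (last x p).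
Proof.
move=> hI; elim: p x => [|z p IH] x //= /andP [hxz hp] Ix.
by apply: IH => //; apply: hI Ix hxz.
Qed.

Lemma connect_inv (T : finType) (e : rel T) (I : pred T) x y :
  (forall a b, I a -> e a b -> I b) -> connect e x y -> I x -> I y.
Proof.
move=> hI /connectP [p hp ->] Ix; exact: (path_inv hI hp Ix).
Qed.

Lemma count_hit (T : finType) (k : nat) (S : 'I_k -> {set T}) (X : {set T}) :
  (forall i j, i != j -> [disjoint S i & S j]) ->
  (forall i, exists x, x \in X /\ x \in S i) ->
  k <= #|X| /\ (#|X| <= k -> X \subset \bigcup_(i < k) S i).
Proof.
move=> hdis /fin_all_exists [f hf].
have finj : injective f.
  move=> i j hij; apply/eqP; apply/negPn/negP => nij.
  have := hdis _ _ nij; rewrite -setI_eq0 => /eqP hI.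
  have : f i \in S i :&: S j by rewrite inE (hf i).2 hij (hf j).2.
  by rewrite hI inE.
have sub : f @: [set: 'I_k] \subset X.
  by apply/subsetP => x /imsetP [i _ ->]; exact: (hf i).1.
have ck : #|f @: [set: 'I_k]| = k by rewrite card_imset // cardsT card_ord.
split; first by rewrite -ck; exact: subset_leq_card.
move=> hX; have /eqP <- : f @: [set: 'I_k] == X by rewrite eqEcard sub ck hX.
apply/subsetP => x /imsetP [i _ ->]; apply/bigcupP; exists i => //; exact: (hf i).2.
Qed.

Definition stG (V : finType) (E C : {set V * V}) := step_in (@fst V V) (@snd V V) (E :\: C).
Definition stH (V : finType) (E : {set V * V}) s k (P : 'I_k -> seq V) (D : {set (V * V) * bool}) :=
  step_in (@aug_src V) (@aug_dst V) (aug_edges E s P :\: D).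
Definition outrel (V : finType) (E : {set V * V}) s k (P : 'I_k -> seq V) : rel V :=
  fun x y => [&& x \notin VH s P, y \notin VH s P & (x, y) \in E].

Lemma stG_E (V : finType) (E C : {set V * V}) x y :
  (x, y) \in E -> (x, y) \notin C -> stG E C x y.
Proof.
move=> hE hC; apply/existsP; exists (x, y); by rewrite inE hC hE /= !eqxx.
Qed.

Lemma stG_inv (V : finType) (E C : {set V * V}) x y :
  stG E C x y -> (x, y) \in E /\ (x, y) \notin C.
Proof.
by case/existsP => -[u v] /andP [/setDP [h1 h2] /andP [/eqP /= <- /eqP /= <-]].
Qed.

Lemma stH_E (V : finType) (E : {set V * V}) s k (P : 'I_k -> seq V) (D : {set (V * V) * bool}) x y (b : bool) :
  ((x, y), b) \in aug_edges E s P -> ((x, y), b) \notin D -> stH E s P D x y.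
Proof.
move=> hE hC; apply/existsP; exists ((x, y), b).
by rewrite inE hC hE /aug_src /aug_dst /= !eqxx.
Qed.

Lemma mem_ape (V : finType) (C : {set V * V}) e b :
  ((e, b) \in as_path_edges C) = b && (e \in C).
Proof.
case: b; last by apply/imsetP => -[x _ []].
rewrite andTb; apply/imsetP/idP => [[x xC [->]]//|eC]; by exists e.
Qed.

Lemma card_ape (V : finType) (C : {set V * V}) : #|as_path_edges C| = #|C|.
Proof. by rewrite card_imset // => a b [->]. Qed.

Lemma PE_VH (V : finType) s k (P : 'I_k -> seq V) x y :
  (x, y) \in PE s P -> x \in VH s P /\ y \in VH s P.
Proof.
case/bigcupP => i _; rewrite inE => /zip_mem [h1 h2].
split; rewrite inE; apply/existsP; exists i => //.
by rewrite in_cons h2 orbT.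
Qed.

Lemma PE_E (V : finType) (E : {set V * V}) s t k (P : 'I_k -> seq V) e :
  (forall i, is_st_path E s t (P i)) -> e \in PE s P -> e \in E.
Proof.
move=> hP; case: e => x y /bigcupP [i _]; rewrite inE.
have /and3P [hp _ _] := hP i.
exact: (path_zip hp).
Qed.

Lemma hitG (V : finType) (E X : {set V * V}) s t p :
  is_st_cut (@fst V V) (@snd V V) E s t X -> is_st_path E s t p ->
  exists e, e \in X /\ e \in path_edges s p.
Proof.
move=> [_ hcut] /and3P [hp /eqP hl _].
case: (boolP [exists e in path_edges s p, e \in X]).
  by case/existsP => e /andP [h1 h2]; exists e.
rewrite negb_exists => /forallP hn.
case/negP: hcut; apply/connectP; exists p; last by rewrite hl.
apply: zip_path => x y hxy; apply: stG_E; first exact: (path_zip hp).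
by have := hn (x, y); rewrite inE hxy.
Qed.

Lemma hitH (V : finType) (E : {set V * V}) s t k (P : 'I_k -> seq V) (D : {set (V * V) * bool}) i :
  is_st_cut (@aug_src V) (@aug_dst V) (aug_edges E s P) s t D ->
  is_st_path E s t (P i) ->
  exists e, e \in D /\ e \in [set (x, true) | x in path_edges s (P i)].
Proof.
move=> [_ hcut] /and3P [hp /eqP hl _].
case: (boolP [exists e in path_edges s (P i), (e, true) \in D]).
  by case/existsP => e /andP [h1 h2]; exists (e, true); split => //; apply/imsetP; exists e.
rewrite negb_exists => /forallP hn.
case/negP: hcut; apply/connectP; exists (P i); last by rewrite hl.
apply: zip_path => x y hxy; apply: (@stH_E _ _ _ _ _ _ _ _ true).
  by rewrite inE /=; apply/bigcupP; exists i => //; rewrite inE.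
by have := hn (x, y); rewrite inE hxy.
Qed.

Lemma dirA (V : finType) (E : {set V * V}) s t k (P : 'I_k -> seq V) (C : {set V * V}) x y :
  (forall i, is_st_path E s t (P i)) -> C \subset PE s P ->
  connect (stH E s P (as_path_edges C)) x y -> connect (stG E C) x y.
Proof.
move=> hP hC; apply: connect_sub => a b.
case/existsP => -[[u v] bb] /andP [/setDP [hin hnD] /andP [/eqP /= hu /eqP /= hv]].
rewrite /aug_src /aug_dst /= in hu hv; subst u v.
have notC : forall z, z \notin PE s P -> z \notin C.
  by move=> z hz; apply/negP => /(subsetP hC); apply/negP.
rewrite inE /= in hin; case: bb hin hnD => hin hnD.
  apply: connect1; apply: stG_E; first exact: (PE_E hP).
  by rewrite mem_ape in hnD.
case/and4P: hin => _ _ _ /orP [/andP [hE hnPE]|].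
  by apply: connect1; apply: stG_E => //; apply: notC.
case/existsP => w1 /existsP [w2 /and5P [n1 n2 e1 e2 hc]].
have nPE : forall u v, (u \notin VH s P) || (v \notin VH s P) -> (u, v) \notin PE s P.
  move=> u v huv; apply/negP => /PE_VH [h1 h2]; by rewrite h1 h2 in huv.
apply: (connect_trans (y:=w1)).
  by apply: connect1; apply: stG_E => //; apply: notC; apply: nPE; rewrite n1 orbT.
apply: (connect_trans (y:=w2)); last first.
  by apply: connect1; apply: stG_E => //; apply: notC; apply: nPE; rewrite n2.
move: hc; apply: connect_sub => c d /and3P [nc nd hcd].
by apply: connect1; apply: stG_E => //; apply: notC; apply: nPE; rewrite nc.
Qed.

Definition invB (V : finType) (E : {set V * V}) s k (P : 'I_k -> seq V)
  (D : {set (V * V) * bool}) : pred V := fun y =>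
  ((y \in VH s P) && connect (stH E s P D) s y) ||
  ((y \notin VH s P) && [exists a, exists w1, [&& connect (stH E s P D) s a,
      a \in VH s P, w1 \notin VH s P, (a, w1) \in E & connect (outrel E s P) w1 y]]).

Lemma dirB (V : finType) (E : {set V * V}) s t k (P : 'I_k -> seq V) (C : {set V * V}) :
  s \in VH s P -> t \in VH s P ->
  connect (stG E C) s t -> connect (stH E s P (as_path_edges C)) s t.
Proof.
move=> sV tV hc.
suff : invB E s P (as_path_edges C) t by rewrite /invB tV /= orbF.
apply: (connect_inv _ hc); last by rewrite /invB sV connect0.
move=> x y hx /stG_inv [hE hnC].
have nD : forall z, ((z, false) \notin as_path_edges C) by move=> z; rewrite mem_ape.
rewrite /invB; case/orP: hx => /andP [hxV hx].
  case: (boolP (y \in VH s P)) => hyV /=; rewrite ?orbF.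
    apply: (connect_trans hx); case: (eqVneq x y) => [<-|nxy]; first exact: connect0.
    apply: connect1; case: (boolP ((x, y) \in PE s P)) => hPE.
      by apply: (@stH_E _ _ _ _ _ _ _ _ true); rewrite ?inE ?mem_ape //.
    apply: (@stH_E _ _ _ _ _ _ _ _ false) => //.
    by rewrite inE /= hxV hyV nxy /outside_reach hE hPE.
  by apply/existsP; exists x; apply/existsP; exists y; rewrite hx hxV hyV hE connect0.
case/existsP: hx => a /existsP [w1 /and5P [ha aV w1V haw hw]].
case: (boolP (y \in VH s P)) => hyV /=; rewrite ?orbF.
  apply: (connect_trans ha); case: (eqVneq a y) => [<-|nay]; first exact: connect0.
  apply: connect1; apply: (@stH_E _ _ _ _ _ _ _ _ false) => //.
  rewrite inE /= aV hyV nay /=; apply/orP; right.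
  apply/existsP; exists w1; apply/existsP; exists x.
  by rewrite w1V hxV haw hE hw.
apply/existsP; exists a; apply/existsP; exists w1; rewrite ha aV w1V haw /=.
apply: (connect_trans hw); apply: connect1; by rewrite /outrel hxV hyV hE.
Qed.

Theorem claim6 (V : finType) (E : {set V * V}) (s t : V) (k : nat)
  (P : 'I_k -> seq V) :
  s != t ->
  lambda_is E s t k ->
  (forall i, is_st_path E s t (P i)) ->
  (forall i j, i != j -> [disjoint path_edges s (P i) & path_edges s (P j)]) ->
  forall D : {set (V * V) * bool},
    Hmincut E s t P D <-> exists C, Gmincut E s t C /\ D = as_path_edges C.
Proof.
move=> hst [C0 [[C0cut C0min] C0k]] hP hdis D.
have cntG : forall X, is_st_cut (@fst V V) (@snd V V) E s t X ->
    k <= #|X| /\ (#|X| <= k -> X \subset PE s P).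
  move=> X hX.
  have [h1 h2] := count_hit (S := fun i => path_edges s (P i)) hdis (fun i => hitG hX (hP i)).
  by split.
have cntH : forall Y, is_st_cut (@aug_src V) (@aug_dst V) (aug_edges E s P) s t Y ->
    k <= #|Y| /\ (#|Y| <= k -> Y \subset
       \bigcup_(i < k) [set (x, true) | x in path_edges s (P i)]).
  move=> Y hY; apply: count_hit; last by move=> i; exact: (hitH hY (hP i)).
  move=> i j nij; rewrite -setI_eq0; apply/eqP/setP => z; rewrite !inE.
  apply/negbTE/negP => /andP [/imsetP [a ha ->] /imsetP [b hb [eab]]]; subst b.
  move: (hdis i j nij); rewrite -setI_eq0 => /eqP hI.
  have : a \in path_edges s (P i) :&: path_edges s (P j) by rewrite inE ha hb.
  by rewrite hI inE.
have C0PE : C0 \subset PE s P by apply: (cntG C0 C0cut).2; rewrite C0k.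
have HcutOf : forall C, is_st_cut (@fst V V) (@snd V V) E s t C -> C \subset PE s P ->
    is_st_cut (@aug_src V) (@aug_dst V) (aug_edges E s P) s t (as_path_edges C).
  move=> C hC hCPE; split.
    by apply/subsetP => z /imsetP [e he ->]; rewrite inE /=; exact: (subsetP hCPE e he).
  apply/negP => hc; case/negP: hC.2; exact: (dirA hP hCPE hc).
have GcutOf : forall C : {set V * V}, C \subset PE s P ->
    is_st_cut (@aug_src V) (@aug_dst V) (aug_edges E s P) s t (as_path_edges C) ->
    is_st_cut (@fst V V) (@snd V V) E s t C.
  move=> C hCPE hH; split.
    by apply/subsetP => e he; apply: (PE_E hP); exact: (subsetP hCPE e he).
  case: (posnP k) => [k0 | kpos].
    have hC0 : C0 = set0 by apply/eqP; rewrite -cards_eq0 C0k k0.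
    apply/negP => hc; case/negP: C0cut.2; move: hc; apply: connect_sub => a b.
    by case/stG_inv => hE _; apply: connect1; apply: stG_E; rewrite ?hC0 ?inE.
  have sV : s \in VH s P.
    by rewrite inE; apply/existsP; exists (Ordinal kpos); exact: mem_head.
  have tV : t \in VH s P.
    have /and3P [_ /eqP hl _] := hP (Ordinal kpos).
    by rewrite inE; apply/existsP; exists (Ordinal kpos); rewrite -hl; exact: mem_last.
  apply/negP => hc; case/negP: hH.2; exact: (dirB sV tV hc).
split.
  move=> [hD hDmin].
  have Dle : #|D| <= k.
    by rewrite -C0k -(card_ape C0); exact: (hDmin _ (HcutOf C0 C0cut C0PE)).
  have hsub := (cntH D hD).2 Dle.
  pose C := [set e | (e, true) \in D].
  have DC : D = as_path_edges C.
    apply/setP => -[e b]; rewrite mem_ape inE; case: b => //=.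
    apply/negbTE/negP => hin; have := subsetP hsub _ hin.
    by case/bigcupP => i _ /imsetP [x _ []].
  have CPE : C \subset PE s P.
    apply/subsetP => e; rewrite inE => hin; have := subsetP hsub _ hin.
    by case/bigcupP => i _ /imsetP [x hx [->]]; apply/bigcupP; exists i.
  exists C; split => //; split.
    by apply: GcutOf CPE _; rewrite -DC.
  move=> C' hC'; rewrite -(card_ape C) -DC; apply: leq_trans Dle _.
  exact: (cntG C' hC').1.
case=> C [[hC hCmin] ->].
have CPE : C \subset PE s P by apply: (cntG C hC).2; rewrite -C0k; exact: hCmin.
split; first exact: HcutOf.
move=> D' hD'; rewrite card_ape; apply: leq_trans (cntH D' hD').1.
by rewrite -C0k; exact: hCmin.
Qed.
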